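(* For $t\in\mathbb N\cup\{\infty\}$ and any nonroot vertex $u$, let $a^t_u(\eta,S)\in\{0,1\}$ be the indicator that $u$ is visited by some frog by time $t$ in the frog model $(\eta,S)$, and let $a^t(\eta,S)=\sum_{v\neq\emptyset}a^t_v(\eta,S)$ be the total number of nonroot vertices visited by time $t$. Then $a^t_u$ and $a^t$ are continuous icv statistics and continuous pgf statistics.
   Context: Frog model: $G$ countable with root $\emptyset$; $(\eta,S)$ consists of counts $\eta(v)\in\{0,1,\dots\}$ for $v\ne\emptyset$ and paths $S_\cdot(v,i)$ with $S_0(v,i)=v$. One active frog starts at $\emptyset$ at time $0$ and is at $S_j(\emptyset,1)$ at time $j$; a frog activated at time $s$ at $v$ is at $S_j(v,i)$ at time $s+j$; when an active frog is at a vertex with sleeping frogs, all of them activate. $\sigma_{P_\cdot}(\eta,S)$: add an extra frog with path $P_\cdot$ at $P_0$ (nonroot). $\Delta_{P_\cdot}f(\eta,S)=f(\sigma_{P_\cdot}(\eta,S))-f(\eta,S)$. $f$ (valued in $[0,\infty]$) is an icv statistic if for all $(\eta,S)$ and paths $P^1_\cdot,\dots,P^m_\cdot$ with a common start: (i) for $m=1,2$, $(-1)^m\Delta_{P^1_\cdot}\cdots\Delta_{P^m_\cdot}f(\eta,S)\le0$ whenever all values $f(\sigma_{P^{u_1}_\cdot}\cdots\sigma_{P^{u_j}_\cdot}(\eta,S))$, $\{u_1,\dots,u_j\}\subseteq\{1,\dots,m\}$, are finite; (ii) $f(\eta,S)=\infty\Rightarrow f(\sigma_{P^1_\cdot}(\eta,S))=\infty$;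 (iii) $f(\sigma_{P^1_\cdot}\sigma_{P^2_\cdot}(\eta,S))=\infty\Rightarrow f(\sigma_{P^i_\cdot}(\eta,S))=\infty$ for $i=1$ or $2$. $f$ is a pgf statistic if (ii),(iii) hold and (i) holds for all $m\ge1$. $f$ is continuous if $\eta_k(v)\nearrow\eta(v)$ for all $v$ implies $f(\eta_k,S)\nearrow f(\eta,S)$. *)

(* Defs.v *)
From HB Require Import structures.
From mathcomp Require Import all_boot all_order all_algebra.
From mathcomp Require Import all_classical all_reals all_analysis.
Set Implicit Arguments. Unset Strict Implicit. Unset Printing Implicit Defensive.
Import Order.TTheory GRing.Theory Num.Theory.
Local Open Scope classical_set_scope.
Local Open Scope ring_scope.

Definition path (V : Type) := nat -> V.

(* A frog-model configuration (eta, S) on the countable vertex set V.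
   eta v = number of sleeping frogs at v (only used for v <> root).
   Frogs at v are indexed by i < eta v (0-based; the paper uses 1..eta v),
   S v i is the path of frog i at v; the initial frog at the root has
   path S root 0 (the paper's S(root,1)). *)
Record config (V : Type) := Config {
  ceta : V -> nat ;
  cS : V -> nat -> path V }.

Definition valid_config (V : Type) (c : config V) : Prop :=
  forall v i, cS c v i 0 = v.

Definition sigma (V : eqType) (P : path V) (c : config V) : config V :=
  Config (fun v => if v == P 0 then (ceta c v).+1 else ceta c v)
         (fun v i => if (v == P 0) && (i == ceta c v) then P else cS c v i).

Definition sigma_seq (V : eqType) (ps : seq (path V)) (c : config V) : config V :=
  foldr (@sigma V) c ps.

(* Dynamics.  hist c t s x  (for s <= t) says that some active frog is at x
   at time s.  Sleeping frogs at a nonroot vertex v are activated at the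
   first time s0 at which v is occupied by an active frog; frog i of v is
   then at S v i j at time s0 + j. *)
Fixpoint hist (V : eqType) (root : V) (c : config V) (t : nat) : nat -> V -> Prop :=
  match t with
  | 0 => fun s x => s = 0%N /\ x = cS c root 0 0
  | t'.+1 =>
      let h := hist root c t' in
      fun s x =>
        ((s <= t')%N /\ h s x) \/
        (s = t'.+1 /\
         (x = cS c root 0 t'.+1 \/
          exists v i s0, [/\ v <> root /\ (i < ceta c v)%N, (s0 <= t')%N,
                            h s0 v, (forall s', (s' < s0)%N -> ~ h s' v) &
                            x = cS c v i (t'.+1 - s0)%N]))
  end.

Definition occupied (V : eqType) (root : V) (c : config V) (s : nat) (x : V) : Prop :=
  hist root c s s x.

(* u is visited by time t (t = None means t = infinity) *)
Definition visited_by (V : eqType) (root : V) (c : config V) (t : option nat) (u : V)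
  : Prop :=
  match t with
  | Some t => exists s, (s <= t)%N /\ occupied root c s u
  | None => exists s, occupied root c s u
  end.

Local Open Scope ereal_scope.

Definition a_u (R : realType) (V : eqType) (root : V) (t : option nat) (u : V)
  (c : config V) : \bar R :=
  if `[< visited_by root c t u >] then 1 else 0.

Definition a_tot (R : realType) (V : choiceType) (root : V) (t : option nat)
  (c : config V) : \bar R :=
  \esum_(v in [set v | v <> root]) a_u R root t v c.

Local Close Scope ereal_scope.

Fixpoint fdiff (R : realType) (V : eqType) (ps : seq (path V)) (g : config V -> R)
  : config V -> R :=
  match ps with
  | [::] => g
  | p :: ps' => fun c => fdiff ps' g (sigma p c) - fdiff ps' g c
  end.

Definition statistic (R : realType) (V : Type) := config V -> \bar R.

Definition common_nonroot_start (V : eqType) (root : V) (ps : seq (path V)) : Prop :=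
  exists x0, x0 <> root /\ all (fun p => p 0 == x0) ps.

Definition cond_i (R : realType) (V : eqType) (root : V) (f : statistic R V)
  (ps : seq (path V)) : Prop :=
  forall c : config V, valid_config c ->
    (forall m : bitseq, f (sigma_seq (mask m ps) c) \is a fin_num) ->
    (-1) ^+ size ps * fdiff ps (fun c' => fine (f c')) c <= 0.

Definition cond_ii (R : realType) (V : eqType) (root : V) (f : statistic R V) : Prop :=
  forall (c : config V) (P : path V), valid_config c -> P 0 <> root ->
    f c = +oo%E -> f (sigma P c) = +oo%E.

Definition cond_iii (R : realType) (V : eqType) (root : V) (f : statistic R V) : Prop :=
  forall (c : config V) (P1 P2 : path V), valid_config c ->
    P1 0 <> root -> P2 0 = P1 0 ->
    f (sigma P1 (sigma P2 c)) = +oo%E ->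
    f (sigma P1 c) = +oo%E \/ f (sigma P2 c) = +oo%E.

Definition nonneg_stat (R : realType) (V : Type) (f : statistic R V) : Prop :=
  forall c, (0 <= f c)%E.

Definition icv_statistic (R : realType) (V : eqType) (root : V) (f : statistic R V)
  : Prop :=
  [/\ nonneg_stat f,
      (forall ps : seq (path V), (size ps = 1 \/ size ps = 2)%N ->
         common_nonroot_start root ps -> cond_i root f ps),
      cond_ii root f & cond_iii root f].

Definition pgf_statistic (R : realType) (V : eqType) (root : V) (f : statistic R V)
  : Prop :=
  [/\ nonneg_stat f,
      (forall ps : seq (path V), (1 <= size ps)%N ->
         common_nonroot_start root ps -> cond_i root f ps),
      cond_ii root f & cond_iii root f].

Definition continuous_stat (R : realType) (V : eqType) (root : V) (f : statistic R V)
  : Prop :=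
  forall (etak : nat -> V -> nat) (eta : V -> nat) (S : V -> nat -> path V),
    (forall v i, S v i 0 = v) ->
    (forall v, v <> root ->
       {homo (fun k => etak k v) : k l / (k <= l)%N >-> (k <= l)%N} /\
       (exists K, forall k, (K <= k)%N -> etak k v = eta v)) ->
    {homo (fun k => f (Config (etak k) S)) : k l / (k <= l)%N >-> (k <= l)%E} /\
    ((fun k => f (Config (etak k) S)) @ \oo --> f (Config eta S)).

(* Main.v *)
Require Import Defs.
Set Warnings "-all".
From HB Require Import structures.
From mathcomp Require Import all_boot all_order all_algebra.
From mathcomp Require Import all_classical all_reals all_analysis.
From mathcomp Require Import finmap zify ring lra.
Set Implicit Arguments. Unset Strict Implicit. Unset Printing Implicit Defensive.
Import Order.TTheory GRing.Theory Num.Theory.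

Section Dyn.
Variables (V : eqType) (root : V).

Inductive occ' (c : config V) : nat -> V -> Prop :=
| OccRoot s : occ' c s (cS c root 0 s)
| OccStep s0 v i j : v <> root -> (i < ceta c v)%N -> occ' c s0 v ->
    occ' c (s0 + j.+1) (cS c v i j.+1).

Definition occ c s x := hist root c s s x.

Lemma hist_stable c t s x : hist root c t s x <-> (s <= t)%N /\ occ c s x.
Proof.
elim: t s x => [|t IH] s x.
  split; first by case=> -> ->; split=> //; rewrite /occ /=.
  by case; rewrite leqn0 => /eqP -> .
split.
- case=> [[st /IH [_ o]]|[es H]]; first by split=> //; exact: leqW.
  by subst s; split=> //; rewrite /occ /=; right.
- move=> [st o]; have [le|gt] := leqP s t.
    by left; split=> //; apply/IH.
  have es : s = t.+1 by apply/eqP; rewrite eqn_leq st gt.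
  subst s; move: o; rewrite /occ /=; case=> [[]|H]; last by right.
  by rewrite ltnn.
Qed.

Lemma occ0 c x : occ c 0 x <-> x = cS c root 0 0.
Proof. by rewrite /occ /=; split; [case|]. Qed.

Lemma occS c t x : occ c t.+1 x <-> (x = cS c root 0 t.+1 \/
  exists v i s0, [/\ v <> root /\ (i < ceta c v)%N, (s0 <= t)%N, occ c s0 v,
     (forall s', (s' < s0)%N -> ~ occ c s' v) & x = cS c v i (t.+1 - s0)%N]).
Proof.
rewrite {1}/occ /=; split.
- case=> [[]|[_ [->|[v [i [s0 [H1 H2 H3 H4 H5]]]]]]]; first by rewrite ltnn.
    by left.
  right; exists v, i, s0; split=> //.
    by have /hist_stable [] := H3.
  move=> s' lt o; apply: (H4 s' lt); apply/hist_stable; split=> //.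
  by apply: leq_trans (ltnW lt) H2.
- case=> [->|[v [i [s0 [H1 H2 H3 H4 H5]]]]]; right; split=> //; first by left.
  right; exists v, i, s0; split=> //; first by apply/hist_stable.
  by move=> s' lt /hist_stable [_ o]; apply: (H4 s' lt).
Qed.

Lemma occ_occ' c s x : occ c s x -> occ' c s x.
Proof.
elim/ltn_ind: s x => -[|t] IH x.
  by move/occ0 => ->; constructor.
move/occS => [->|[v [i [s0 [[nr li] H2 H3 H4 ->]]]]]; first by constructor.
have -> : t.+1 = s0 + (t - s0).+1 by lia.
have -> : (s0 + (t - s0).+1 - s0 = (t - s0).+1)%N by lia.
by apply: OccStep => //; apply: IH => //; lia.
Qed.

Lemma occ'_occ c s x : occ' c s x -> exists2 s', (s' <= s)%N & occ c s' x.
Proof.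
elim=> [{}s|s0 v i j nr li _ [s1 le1 o1]].
  exists s => //; case: s => [|t]; first by apply/occ0.
  by apply/occS; left.
have ex : exists n, `[< occ c n v >] by exists s1; apply/asboolP.
case: (ex_minnP ex) => T /asboolP oT minT.
have TS : (T <= s1)%N by apply: minT; apply/asboolP.
exists (T + j.+1); first by lia.
rewrite addnS; apply/occS; right; exists v, i, T; split=> //.
- exact: leq_addr.
- move=> s' lt o; have := minT s'; rewrite (asboolT o) => /(_ isT); lia.
- by congr (cS c v i _); lia.
Qed.

Definition vis' (c : config V) (t : option nat) (u : V) : Prop :=
  match t with
  | Some t => exists s, (s <= t)%N /\ occ' c s u
  | None => exists s, occ' c s u
  end.

Lemma visE c t u : visited_by root c t u <-> vis' c t u.
Proof.
case: t => [t|] /=; split.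
- by move=> [s [st /occ_occ' o]]; exists s.
- move=> [s [st /occ'_occ [s' le o]]]; exists s'; split=> //; exact: leq_trans le st.
- by move=> [s /occ_occ' o]; exists s.
- by move=> [s /occ'_occ [s' le o]]; exists s'.
Qed.

Definition cle (c d : config V) :=
  cS d root 0 = cS c root 0 /\
  forall v i, v <> root -> (i < ceta c v)%N -> (i < ceta d v)%N /\ cS d v i = cS c v i.

Lemma cle_refl c : cle c c.
Proof. by split. Qed.

Lemma cle_trans c d e : cle c d -> cle d e -> cle c e.
Proof.
move=> [r1 h1] [r2 h2]; split; first by rewrite r2.
move=> v i nr li; have [l2 e2] := h1 v i nr li; have [l3 e3] := h2 v i nr l2.
by rewrite e3.
Qed.

Lemma occ'_mono c d : cle c d -> forall s x, occ' c s x -> occ' d s x.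
Proof.
move=> [r h] s x; elim=> {s x} [s|s0 v i j nr li _ IH]; first by rewrite -r; constructor.
have [l e] := h v i nr li; rewrite -e; exact: OccStep.
Qed.

Definition cext (x0 : V) c e := cle c e /\
  forall v i, v <> root -> (i < ceta e v)%N -> (i < ceta c v)%N \/ v = x0.

Lemma cext_refl x0 c : cext x0 c c.
Proof. by split; [exact: cle_refl|left]. Qed.

Lemma cext_trans x0 c d e : cext x0 c d -> cext x0 d e -> cext x0 c e.
Proof.
move=> [l1 h1] [l2 h2]; split; first exact: cle_trans l2.
move=> v i nr li; case: (h2 v i nr li) => [l|]; last by right.
exact: h1.
Qed.

Lemma sigma_old (P : Defs.path V) c v i : (i < ceta c v)%N ->
  (i < ceta (sigma P c) v)%N /\ cS (sigma P c) v i = cS c v i.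
Proof.
move=> li; rewrite /= (ltn_eqF li) andbF; split=> //.
by case: ifP => // _; rewrite ltnS ltnW.
Qed.

Lemma sigma_frog (P : Defs.path V) c v i : (i < ceta (sigma P c) v)%N ->
  (v = P 0 /\ i = ceta c v) \/ ((i < ceta c v)%N /\ cS (sigma P c) v i = cS c v i).
Proof.
rewrite /=; case: (eqVneq v (P 0)) => [ev|nv] /=.
  rewrite ltnS leq_eqVlt => /orP [/eqP ei|li]; first by left.
  by right; rewrite (ltn_eqF li).
by move=> li; right.
Qed.

Lemma cext_sigma (P : Defs.path V) c : P 0 <> root -> cext (P 0) c (sigma P c).
Proof.
move=> Pr; split; first split.
- rewrite /=; case: eqP => //= e; by exfalso; apply: Pr.
- by move=> v i _ li; apply: sigma_old.
- move=> v i _ li; case: (sigma_frog li) => [[-> _]|[l _]]; [right|left] => //.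
Qed.

Lemma cle_sigma (P : Defs.path V) c : P 0 <> root -> cle c (sigma P c).
Proof. by move=> H; case: (cext_sigma c H). Qed.

Lemma occ'_C x0 c e : cext x0 c e -> forall s x, occ' e s x ->
  occ' c s x \/ exists2 r, (r < s)%N & occ' c r x0.
Proof.
move=> [[r h] h2] s x; elim=> {s x} [s|s0 v i j nr li _ [IH|[r0 lr o]]].
- by left; rewrite r; constructor.
- case: (h2 v i nr li) => [l|ev].
    by left; have [_ e1] := h v i nr l; rewrite e1; exact: OccStep.
  by right; exists s0; [lia|rewrite -ev].
- by right; exists r0 => //; lia.
Qed.

Lemma occ'_pair x0 c d (q : Defs.path V) : cext x0 c d -> q 0 = x0 -> x0 <> root ->
  forall s x, occ' (sigma q d) s x ->
  exists2 s', (s' <= s)%N & (occ' d s' x \/ occ' (sigma q c) s' x).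
Proof.
move=> cd q0 xr; subst x0.
have cqd : cext (q 0) c (sigma q d) by apply: cext_trans cd (cext_sigma d xr).
have cqc : cext (q 0) c (sigma q c) by apply: cext_sigma.
move=> s x; elim=> {s x} [s|s0 v i j nr li o [s1 le1 IH]].
- exists s => //; left; have [[r' _] _] := cext_sigma d xr.
  by rewrite r'; constructor.
case: (sigma_frog li) => [[ev ei]|[l ecs]].
-
  subst v; have [r rl orr] : exists2 r, (r <= s0)%N & occ' c r (q 0).
    case: (occ'_C cqd o); first by move=> ?; exists s0.
    by move=> [r lr or]; exists r => //; exact: ltnW.
  exists (r + j.+1); first by lia.
  right; have -> : cS (sigma q d) (q 0) i j.+1 = cS (sigma q c) (q 0) (ceta c (q 0)) j.+1.
    by rewrite /= ei !eqxx.
  apply: OccStep => //; first by rewrite /= eqxx.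
  exact: occ'_mono (cqc.1) _ _ orr.
- rewrite ecs; case: IH => [od|oq].
    by exists (s1 + j.+1); [lia|left; apply: OccStep].
  case: (cd.2 v i nr l) => [lc|ev].
    exists (s1 + j.+1); first by lia.
    right; have [_ e1] := cd.1.2 v i nr lc; rewrite e1.
    have [l2 e2] := cqc.1.2 v i nr lc; rewrite -e2; exact: OccStep.
  subst v; have [r rl orr] : exists2 r, (r <= s1)%N & occ' c r (q 0).
    case: (occ'_C cqc oq); first by move=> ?; exists s1.
    by move=> [r lr or]; exists r => //; exact: ltnW.
  exists (r + j.+1); first by lia.
  left; apply: OccStep => //; exact: occ'_mono (cd.1) _ _ orr.
Qed.


Definition cle' (c d : config V) :=
  cS d root 0 = cS c root 0 /\
  forall v i, v <> root -> (i < ceta c v)%N ->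
    exists2 k, (k < ceta d v)%N & cS d v k = cS c v i.

Lemma cle_cle' c d : cle c d -> cle' c d.
Proof. move=> [r h]; split=> // v i nr li; have [l e] := h v i nr li; by exists i. Qed.

Lemma cle'_trans c d e : cle' c d -> cle' d e -> cle' c e.
Proof.
move=> [r1 h1] [r2 h2]; split; first by rewrite r2.
move=> v i nr li; have [k l2 e2] := h1 v i nr li; have [k' l3 e3] := h2 v k nr l2.
by exists k'; rewrite // e3.
Qed.

Lemma cle'_sigma (q : Defs.path V) c d : q 0 <> root -> cle' c d -> cle' (sigma q c) (sigma q d).
Proof.
move=> qr [r h]; split.
  have [[r1 _] _] := cext_sigma c qr; have [[r2 _] _] := cext_sigma d qr.
  by rewrite r1 r2.
move=> v i nr li; case: (sigma_frog li) => [[ev ei]|[l ecs]].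
  subst v; exists (ceta d (q 0)); first by rewrite /= eqxx.
  by rewrite /= ei !eqxx.
have [k lk ek] := h v i nr l; have [l2 e2] := sigma_old q lk.
by exists k; rewrite // e2 ecs.
Qed.

Lemma occ'_mono' c d : cle' c d -> forall s x, occ' c s x -> occ' d s x.
Proof.
move=> [r h] s x; elim=> {s x} [s|s0 v i j nr li _ IH]; first by rewrite -r; constructor.
have [k l e] := h v i nr li; rewrite -e; exact: OccStep.
Qed.

Lemma vb_mono c d t u : cle' c d -> visited_by root c t u -> visited_by root d t u.
Proof.
move=> cd; rewrite !visE; case: t => [t|] /=.
  by move=> [s [st o]]; exists s; split=> //; exact: occ'_mono' cd _ _ o.
by move=> [s o]; exists s; exact: occ'_mono' cd _ _ o.
Qed.

Lemma vb_pair x0 c d (q : Defs.path V) t u : cext x0 c d -> q 0 = x0 -> x0 <> root ->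
  visited_by root (sigma q d) t u -> visited_by root d t u \/ visited_by root (sigma q c) t u.
Proof.
move=> cd q0 xr; rewrite !visE; case: t => [t|] /=.
  move=> [s [st o]]; case: (occ'_pair cd q0 xr o) => s1 hs [ o1 | o2 ].
    by left; exists s1; split=> //; exact: leq_trans hs st.
  by right; exists s1; split=> //; exact: leq_trans hs st.
move=> [s o]; case: (occ'_pair cd q0 xr o) => s1 hs [ o1 | o2 ].
  by left; exists s1.
by right; exists s1.
Qed.

End Dyn.
Definition bv (V : eqType) (root : V) t u (c : config V) : bool :=
  `[< visited_by root c t u >].
Definition gv (R : realType) (V : eqType) (root : V) t u (c : config V) : R :=
  if bv root t u c then 1%R else 0%R.

Section Formula.
Local Open Scope ring_scope.
Variables (R : realType) (V : eqType) (root : V) (t : option nat) (u : V).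
Variable x0 : V.
Hypothesis xr : x0 <> root.

Local Notation b := (bv root t u).
Local Notation g := (@gv R V root t u).

Lemma bmono (p : Defs.path V) c : p 0 = x0 -> b c -> b (sigma p c).
Proof.
move=> p0; rewrite /bv => /asboolP H; apply/asboolP; apply: vb_mono H.
by apply: cle_cle'; apply: cle_sigma; rewrite p0.
Qed.

Lemma bpair (p q : Defs.path V) c : p 0 = x0 -> q 0 = x0 ->
  b (sigma q (sigma p c)) = b (sigma q c) || b (sigma p c).
Proof.
move=> p0 q0; rewrite /bv; apply/idP/idP.
  move=> /asboolP H.
  have cpc : cext root x0 c (sigma p c) by rewrite -p0; apply: cext_sigma; rewrite p0.
  by case: (vb_pair cpc q0 xr H) => /asboolP ->; rewrite ?orbT.
case/orP => /asboolP H; apply/asboolP; apply: vb_mono H.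
  apply: cle'_sigma; first by rewrite q0.
  by apply: cle_cle'; apply: cle_sigma; rewrite p0.
by apply: cle_cle'; apply: cle_sigma; rewrite q0.
Qed.

Lemma fdiff_formula (p : Defs.path V) ps c : p 0 = x0 -> all (fun q => q 0 == x0) ps ->
  fdiff (p :: ps) g c = (-1) ^+ size ps *
    (if ~~ b c && b (sigma p c) && all (fun q => b (sigma q c)) ps then 1 else 0).
Proof.
elim: ps p c => [|q ps IH] p c p0 Hall.
  rewrite /= expr0 mul1r andbT; have := @bmono p c p0.
  rewrite /gv; case: (bv root t u c); case: (bv root t u (sigma p c)) => //= H.
  - by rewrite subrr.
  - by have := H isT.
  - by rewrite subr0.
  - by rewrite subrr.
move: Hall => /andP [/eqP q0 Hall].
change (fdiff (q :: ps) g (sigma p c) - fdiff (q :: ps) g c = (-1) ^+ (size ps).+1 *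
    (if ~~ b c && b (sigma p c) && all (fun q => b (sigma q c)) (q :: ps) then 1 else 0)).
rewrite (IH q (sigma p c) q0 Hall) (IH q c q0 Hall) exprS.
have := @bmono p c p0.
case bp: (b (sigma p c)) => /= bc.
  by rewrite mulr0 sub0r andbT andbA mulN1r mulNr.
have bc' : b c = false by apply/negbTE/negP => /bc.
rewrite andbF /= mulr0 bc' /= bpair // bp orbF.
rewrite (@eq_in_all _ _ (fun r => b (sigma r c))); first by rewrite subrr.
move=> r /(allP Hall) /eqP r0; by rewrite bpair // bp orbF.
Qed.

End Formula.
Local Open Scope classical_set_scope. Local Open Scope ring_scope.
Lemma au_cond_i (R : realType) (V : eqType) (root : V) t u (ps : seq (Defs.path V)) c :
  (1 <= size ps)%N -> common_nonroot_start root ps ->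
  (-1) ^+ size ps * fdiff ps (@gv R V root t u) c <= 0.
Proof.
case: ps => [|p ps] // _ [x0 [xr /andP [/eqP p0 Hall]]].
rewrite (fdiff_formula R t u xr c p0 Hall).
rewrite exprS -(signr_odd R (size ps)).
by case: (odd (size ps)); case: ifP => _; rewrite ?expr0 ?expr1; lra.
Qed.

Lemma fine_au (R : realType) (V : choiceType) (root : V) t u :
  (fun c => fine (a_u R root t u c)) = gv R root t u.
Proof. by apply: funext => c; rewrite /a_u /gv /bv; case: ifP. Qed.

Lemma au_EFin (R : realType) (V : choiceType) (root : V) t u c :
  a_u R root t u c = (gv R root t u c)%:E.
Proof. by rewrite /a_u /gv /bv; case: ifP. Qed.

Fixpoint fam (V : eqType) (ps : seq (Defs.path V)) (c d : config V) : Prop :=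
  match ps with
  | [::] => d = c
  | p :: ps => fam ps (sigma p c) d \/ fam ps c d
  end.

Lemma fdiff_ext (R : realType) (V : eqType) ps (g g' : config V -> R) c :
  (forall d, fam ps c d -> g d = g' d) -> fdiff ps g c = fdiff ps g' c.
Proof.
elim: ps c => [|p ps IH] c H /=; first exact: H.
by rewrite (IH (sigma p c)) ?(IH c) // => d fd; apply: H; [right|left].
Qed.

Lemma fdiff_sum (R : realType) (V : eqType) ps (W : seq V)
    (G : V -> config V -> R) c :
  fdiff ps (fun d => \sum_(v <- W) G v d) c = \sum_(v <- W) fdiff ps (G v) c.
Proof.
elim: ps c => [|p ps IH] c //=.
by rewrite !IH -sumrB.
Qed.

Lemma all_In (V : eqType) (x0 : V) (ps : seq (Defs.path V)) :
  all (fun p => p 0 == x0) ps -> forall p, List.In p ps -> p 0 = x0.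
Proof.
elim: ps => [|q ps IH] //= /andP [/eqP q0 H] p [<-|/IH]; by [|apply].
Qed.

Lemma fam_vis (V : eqType) (root x0 : V) t v (ps : seq (Defs.path V)) c d :
  x0 <> root -> (forall p, List.In p ps -> p 0 = x0) -> fam ps c d ->
  visited_by root d t v ->
  visited_by root c t v \/ exists p, List.In p ps /\ visited_by root (sigma p c) t v.
Proof.
move=> xr; elim: ps c => [|p ps IH] c Hin /=; first by move=> ->; left.
have p0 : p 0 = x0 by apply: Hin; left.
have Hin' : forall q, List.In q ps -> q 0 = x0 by move=> q qi; apply: Hin; right.
case=> [fd|fd] vd.
  case: (IH _ Hin' fd vd) => [h|[q [qi h]]]; first by right; exists p; split=> //; left.
  have cpc : cext root x0 c (sigma p c) by rewrite -p0; apply: cext_sigma; rewrite p0.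
  case: (vb_pair cpc (Hin' q qi) xr h) => h'; right.
    by exists p; split=> //; left.
  by exists q; split=> //; right.
case: (IH _ Hin' fd vd) => [h|[q [qi h]]]; first by left.
by right; exists q; split=> //; right.
Qed.

Lemma mask_single (T : Type) (ps : seq T) p : List.In p ps ->
  exists m, mask m ps = [:: p].
Proof.
elim: ps => [|q ps IH] //= [<-|/IH [m hm]].
  by exists (true :: nseq (size ps) false); rewrite /= mask_false.
by exists (false :: m).
Qed.
Lemma atot_fin_seq (R : realType) (V : choiceType) (root : V) t d :
  a_tot R root t d \is a fin_num ->
  exists s : seq V, forall v, v <> root -> visited_by root d t v -> v \in s.
Proof.
move=> fin.
pose S := [set v | v <> root /\ visited_by root d t v].
have : finite_set S.
  apply: contrapT => inf.
  have [B BS szB] := infinite_set_fset (Num.trunc (fine (a_tot R root t d))).+1 inf.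
  have : (((#|` B|)%:R : R)%:E <= a_tot R root t d)%E.
    rewrite /a_tot; apply: esum_ge; exists [set` B].
      by split; [exact: finite_fset | move=> v /BS []].
    rewrite -fsbig_seq ?fset_uniq //.
    have -> : (\sum_(i <- B) a_u R root t i d = \sum_(i <- B) (1%R : R)%:E)%E.
      rewrite big_seq [RHS]big_seq; apply: eq_bigr => v vB.
      by rewrite /a_u; have [_ h] := BS v vB; rewrite asboolT.
    by rewrite sumEFin lee_fin -sum1_size natr_sum.
  rewrite -(fineK fin) lee_fin => H.
  have := truncnS_gt (fine (a_tot R root t d)).
  have : ((Num.trunc (fine (a_tot R root t d))).+1%:R <= (#|` B|)%:R :> R)%R.
    by rewrite ler_nat.
  lra.
move=> /finite_seqP [s es]; exists s => v vr vd.
by have : S v by []; rewrite es.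
Qed.

Lemma atot_sum (R : realType) (V : choiceType) (root : V) t d (s : seq V) :
  uniq s -> (forall v, v \in s -> v <> root) ->
  (forall v, v <> root -> visited_by root d t v -> v \in s) ->
  a_tot R root t d = (\sum_(v <- s) gv R root t v d)%:E.
Proof.
move=> us Hr Hs.
rewrite /a_tot (esumID [set` s]); last by move=> v _; rewrite /a_u; case: ifP.
rewrite [X in (_ + X)%E]esum1 ?adde0; last first.
  move=> v [vr vs]; rewrite /a_u asboolF //; move=> vd; apply: vs; exact: Hs vr vd.
have -> : [set v | v <> root] `&` [set` s] = [set` s].
  by apply/seteqP; split=> v; [case | move=> vs; split=> //; exact: Hr].
rewrite esum_fset //; last by move=> v _; rewrite /a_u; case: ifP.
rewrite -fsbig_seq // -sumEFin; apply: eq_bigr => v _; exact: au_EFin.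
Qed.
Lemma atot_cond_i (R : realType) (V : choiceType) (root : V) t (ps : seq (Defs.path V)) :
  (1 <= size ps)%N -> common_nonroot_start root ps -> cond_i root (@a_tot R V root t) ps.
Proof.
move=> sz [x0 [xr Hall]] c _ Hfin.
have Hin := all_In Hall.
have finc : a_tot R root t c \is a fin_num.
  by have := Hfin (nseq (size ps) false); rewrite mask_false.
have finp : forall p, List.In p ps -> a_tot R root t (sigma p c) \is a fin_num.
  by move=> p pi; have [m hm] := mask_single pi; have := Hfin m; rewrite hm.
have [s0 hs0] := atot_fin_seq finc.
have [W0 hW0] : exists W : seq V, forall p, List.In p ps ->
    forall v, v <> root -> visited_by root (sigma p c) t v -> v \in W.
  clear sz Hall Hfin Hin; elim: ps finp => [|q qs IH] fq; first by exists [::].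
  have [sq hsq] := atot_fin_seq (fq q (or_introl erefl)).
  have [W hW] := IH (fun p pi => fq p (or_intror pi)).
  exists (sq ++ W) => p [<-|pi] v vr vd; rewrite mem_cat.
    by rewrite hsq.
  by rewrite (hW p pi v vr vd) orbT.
pose W := undup [seq v <- s0 ++ W0 | v != root].
have Wu : uniq W := undup_uniq _.
have Wr : forall v, v \in W -> v <> root.
  by move=> v; rewrite mem_undup mem_filter => /andP [/eqP].
have Wc : forall d, fam ps c d -> forall v, v <> root -> visited_by root d t v -> v \in W.
  move=> d fd v vr vd; rewrite mem_undup mem_filter mem_cat; apply/andP; split.
    by apply/eqP.
  case: (fam_vis xr Hin fd vd) => [h|[p [pi h]]]; first by rewrite hs0.
  by rewrite (hW0 p pi v vr h) orbT.
rewrite (@fdiff_ext R V ps _ (fun d => \sum_(v <- W) gv R root t v d)); last first.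
  by move=> d fd; rewrite (atot_sum R Wu Wr (Wc d fd)).
rewrite fdiff_sum mulr_sumr; apply: sumr_le0 => v _.
by apply: au_cond_i => //; exists x0.
Qed.

Lemma au_ge0 (R : realType) (V : choiceType) (root : V) t u c : (0 <= a_u R root t u c)%E.
Proof. by rewrite /a_u; case: ifP. Qed.

Lemma au_ii (R : realType) (V : choiceType) (root : V) t u : cond_ii root (@a_u R V root t u).
Proof. by move=> c P _ _; rewrite /a_u; case: ifP. Qed.

Lemma au_iii (R : realType) (V : choiceType) (root : V) t u : cond_iii root (@a_u R V root t u).
Proof. by move=> c P1 P2 _ _ _; rewrite /a_u; case: ifP. Qed.

Lemma au_mono (R : realType) (V : choiceType) (root : V) t u c d :
  cle' root c d -> (a_u R root t u c <= a_u R root t u d)%E.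
Proof.
move=> cd; rewrite /a_u; case: asboolP => h; case: asboolP => h' //.
by exfalso; apply: h'; exact: vb_mono cd h.
Qed.

Lemma atot_ge0 (R : realType) (V : choiceType) (root : V) t c : (0 <= a_tot R root t c)%E.
Proof. by apply: esum_ge0 => v _; exact: au_ge0. Qed.

Lemma atot_mono (R : realType) (V : choiceType) (root : V) t c d :
  cle' root c d -> (a_tot R root t c <= a_tot R root t d)%E.
Proof. by move=> cd; apply: le_esum => v _; exact: au_mono. Qed.

Lemma atot_ii (R : realType) (V : choiceType) (root : V) t : cond_ii root (@a_tot R V root t).
Proof.
move=> c P _ Pr H; apply/eqP; rewrite -leye_eq -H; apply: atot_mono.
by apply: cle_cle'; exact: cle_sigma.
Qed.

Lemma atot_iii (R : realType) (V : choiceType) (root : V) t : cond_iii root (@a_tot R V root t).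
Proof.
move=> c P1 P2 _ P1r P21 H.
have cpc : cext root (P1 0) c (sigma P2 c) by rewrite -P21; apply: cext_sigma; rewrite P21.
have le : (a_tot R root t (sigma P1 (sigma P2 c)) <=
           a_tot R root t (sigma P1 c) + a_tot R root t (sigma P2 c))%E.
  rewrite /a_tot -esumD; last by move=> *; exact: au_ge0.
    apply: le_esum => v _; rewrite {1}/a_u; case: asboolP => h; last first.
      by rewrite adde_ge0 // au_ge0.
    case: (vb_pair cpc erefl P1r h) => h'.
      by rewrite [X in (_ <= _ + X)%E]/a_u asboolT // leeDr // au_ge0.
    by rewrite [X in (_ <= X + _)%E]/a_u asboolT // leeDl // au_ge0.
  by move=> *; exact: au_ge0.
move: le; rewrite H.
have := atot_ge0 R root t (sigma P1 c); have := atot_ge0 R root t (sigma P2 c).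
case: (a_tot R root t (sigma P1 c)) => [x| |]; case: (a_tot R root t (sigma P2 c)) => [y| |] //=;
  by [left|right].
Qed.
Section Cont.
Variables (V : eqType) (root : V) (etak : nat -> V -> nat) (eta : V -> nat)
  (S : V -> nat -> Defs.path V).
Hypothesis H : forall v, v <> root ->
  {homo (fun k => etak k v) : k l / (k <= l)%N >-> (k <= l)%N} /\
  (exists K, forall k, (K <= k)%N -> etak k v = eta v).

Lemma cfg_le k l : (k <= l)%N -> cle' root (Config (etak k) S) (Config (etak l) S).
Proof.
move=> kl; split=> // v i vr li; exists i => //.
have [hm _] := H vr; exact: leq_trans li (hm _ _ kl).
Qed.

Lemma cfg_lim k : cle' root (Config (etak k) S) (Config eta S).
Proof.
split=> // v i vr li; exists i => //.
have [hm [K hK]] := H vr; rewrite /= -(hK (maxn k K)) ?leq_maxr //.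
exact: leq_trans li (hm _ _ (leq_maxl _ _)).
Qed.

Lemma occ_ev s x : occ' root (Config eta S) s x ->
  exists K, forall k, (K <= k)%N -> occ' root (Config (etak k) S) s x.
Proof.
elim=> {s x} [s|s0 v i j vr li _ [K1 h1]].
  by exists 0 => k _; exact: (OccRoot root (Config (etak k) S) s).
have [hm [K2 h2]] := H vr.
exists (maxn K1 K2) => k kK.
have e := h2 k (leq_trans (leq_maxr _ _) kK).
apply: (OccStep (c:=Config (etak k) S) (i:=i) (v:=v)) => //.
  by rewrite /= e.
by apply: h1; exact: leq_trans (leq_maxl _ _) kK.
Qed.

Lemma vis_ev t u : visited_by root (Config eta S) t u ->
  exists K, forall k, (K <= k)%N -> visited_by root (Config (etak k) S) t u.
Proof.
case: t => [t|] h.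
  move: h; rewrite visE => -[s [st o]]; have [K hK] := occ_ev o; exists K => k kK.
  by rewrite visE; exists s; split=> //; exact: hK.
move: h; rewrite visE => -[s o]; have [K hK] := occ_ev o; exists K => k kK.
by rewrite visE; exists s; exact: hK.
Qed.

End Cont.

Lemma au_cont (R : realType) (V : choiceType) (root : V) t u :
  continuous_stat root (@a_u R V root t u).
Proof.
move=> etak eta S HS H; split.
  by move=> k l kl; apply: au_mono; exact: (@cfg_le _ root etak eta S H k l kl).
apply: cvg_near_cst.
case: (asboolP (visited_by root (Config eta S) t u)) => h.
  have [K hK] := vis_ev H h; exists K => // k /= Kk.
  by rewrite /a_u (asboolT (hK k Kk)) (asboolT h).
exists 0%N => // k _ /=.
rewrite /a_u (asboolF h) asboolF // => hk; apply: h.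
exact: vb_mono ((@cfg_lim _ root etak eta S H k)) hk.
Qed.

Lemma atot_cont (R : realType) (V : choiceType) (root : V) t :
  continuous_stat root (@a_tot R V root t).
Proof.
move=> etak eta S HS H.
have nd : nondecreasing_seq (fun k => a_tot R root t (Config (etak k) S)).
  by move=> k l kl; apply: atot_mono; exact: (@cfg_le _ root etak eta S H k l kl).
split=> //.
suff -> : a_tot R root t (Config eta S) =
  ereal_sup (range (fun k => a_tot R root t (Config (etak k) S))).
  exact: ereal_nondecreasing_cvgn.
apply/eqP; rewrite eq_le; apply/andP; split; last first.
  by apply: ge_ereal_sup => _ [k _ <-]; apply: atot_mono; exact: (@cfg_lim _ root etak eta S H k).
rewrite {1}/a_tot /esum; apply: ge_ereal_sup => _ [X [finX XD] <-].
move: (finX) => /finite_seqP [s es].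
have [K hK] : exists K, forall v, v \in s ->
    visited_by root (Config eta S) t v -> visited_by root (Config (etak K) S) t v.
  elim: s {es} => [|w s [K hK]]; first by exists 0%N.
  case: (asboolP (visited_by root (Config eta S) t w)) => hw.
    have [K' hK'] := vis_ev H hw; exists (maxn K K') => v.
    rewrite inE => /orP [/eqP -> _|vs vv]; first exact: hK' _ (leq_maxr _ _).
    apply: (vb_mono ((@cfg_le _ root etak eta S H _ _ (leq_maxl K K')))); exact: hK.
  exists K => v; rewrite inE => /orP [/eqP -> //|vs]; exact: hK.
apply: (@le_trans _ _ (a_tot R root t (Config (etak K) S))); last first.
  by apply: ereal_sup_ubound; exists K.
apply: (@le_trans _ _ (\sum_(x \in X) a_u R root t x (Config (etak K) S))%R).
  apply: lee_fsum => // v Xv; rewrite /a_u; case: asboolP => h; last by case: ifP.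
  rewrite asboolT //; apply: hK => //; move: Xv; rewrite es.
  by [].
by apply: esum_ge; exists X.
Qed.

Local Close Scope ring_scope.
Local Close Scope classical_set_scope.
Unset Implicit Arguments.

Theorem proposition21 (R : realType) (V : countType) (root : V) :
  forall t : option nat,
    (forall u : V, u <> root ->
       let f := @a_u R V root t u in
       [/\ continuous_stat root f, icv_statistic root f & pgf_statistic root f]) /\
    (let f := @a_tot R V root t in
     [/\ continuous_stat root f, icv_statistic root f & pgf_statistic root f]).
Proof.
move=> t; split.
- move=> u _ /=; split.
  + exact: au_cont.
  + split; [by move=> c; exact: au_ge0 | | exact: au_ii | exact: au_iii].
    move=> ps hs hc c _ _; rewrite fine_au; apply: au_cond_i => //.
    by case: hs => ->.
  + split; [by move=> c; exact: au_ge0 | | exact: au_ii | exact: au_iii].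
    by move=> ps hs hc c _ _; rewrite fine_au; apply: au_cond_i.
- rewrite /=; split.
  + exact: atot_cont.
  + split; [by move=> c; exact: atot_ge0 | | exact: atot_ii | exact: atot_iii].
    move=> ps hs hc; apply: atot_cond_i => //.
    by case: hs => ->.
  + split; [by move=> c; exact: atot_ge0 | | exact: atot_ii | exact: atot_iii].
    by move=> ps hs hc; apply: atot_cond_i.
Qed.
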